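(* Let $p\in\mathbb{R}$. If $z=(v,m,\sigma,e)\in Z$ satisfies $m\ne(e+p)v$ and $\lambda_{\max}(v\otimes v-\sigma)<e$, then $z\in K^{\Lambda,2}$.
   Context: $\mathcal S_0^{2\times2}$ is the space of traceless symmetric $2\times2$ matrices, $Z:=\mathbb{R}^2\times\mathbb{R}^2\times\mathcal S_0^{2\times2}\times\mathbb{R}$, $\lambda_{\max}$ the largest eigenvalue, $K:=\{z\in Z: v\otimes v-\sigma=e\,\mathrm{Id},\ m=(e+p)v\}$. The wave cone is $\Lambda=\{\bar z=(\bar v,\bar m,\bar\sigma,\bar e)\in Z:\ (\bar v,\bar e)\neq0\text{ and there is }0\ne(\xi,c)\in\mathbb{R}^2\times\mathbb{R}\text{ with }(\bar\sigma+\bar e\,\mathrm{Id})\xi+c\bar v=0,\ \bar v\cdot\xi=0,\ \bar m\cdot\xi+c\bar e=0\}$. For $A\subset Z$, $A^{\Lambda,1}:=A\cup\{sz_1+(1-s)z_2: z_1,z_2\in A,\ s\in[0,1],\ z_1-z_2\in\Lambda\}$; $K^{\Lambda,1}:=(K)^{\Lambda,1}$ and $K^{\Lambda,2}:=(K^{\Lambda,1})^{\Lambda,1}$. *)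

(* Defs.v *)
From HB Require Import structures.
From mathcomp Require Import all_boot all_order all_algebra.
From mathcomp Require Import reals.
Set Implicit Arguments. Unset Strict Implicit. Unset Printing Implicit Defensive.
Import Order.TTheory GRing.Theory Num.Theory.
Local Open Scope ring_scope.

(* Ambient space: (v, m, sigma, e) with v, m column vectors in R^2,
   sigma a 2x2 matrix (required to be symmetric traceless by inZ), e real. *)
Definition Zt (R : realType) : Type :=
  ('cV[R]_2 * 'cV[R]_2 * 'M[R]_2 * R)%type.

Definition dot (R : realType) (u w : 'cV[R]_2) : R := \sum_(i < 2) u i 0 * w i 0.

Definition inZ (R : realType) (z : Zt R) : Prop :=
  let '(v, m, s, e) := z in s^T = s /\ \tr s = 0.

Definition tens (R : realType) (v : 'cV[R]_2) : 'M[R]_2 := v *m v^T.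

Definition inK (R : realType) (p : R) (z : Zt R) : Prop :=
  inZ z /\
  let '(v, m, s, e) := z in tens v - s = e%:M /\ m = (e + p) *: v.

Definition wave_cone (R : realType) (z : Zt R) : Prop :=
  inZ z /\
  let '(v, m, s, e) := z in
  ~ (v = 0 /\ e = 0) /\
  exists (xi : 'cV[R]_2) (c : R),
    ~ (xi = 0 /\ c = 0) /\
    (s + e%:M) *m xi + c *: v = 0 /\
    dot v xi = 0 /\
    dot m xi + c * e = 0.

Definition Zsub (R : realType) (z1 z2 : Zt R) : Zt R :=
  let '(v1, m1, s1, e1) := z1 in
  let '(v2, m2, s2, e2) := z2 in
  (v1 - v2, m1 - m2, s1 - s2, e1 - e2).

Definition Zcomb (R : realType) (t : R) (z1 z2 : Zt R) : Zt R :=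
  let '(v1, m1, s1, e1) := z1 in
  let '(v2, m2, s2, e2) := z2 in
  (t *: v1 + (1 - t) *: v2, t *: m1 + (1 - t) *: m2,
   t *: s1 + (1 - t) *: s2, t * e1 + (1 - t) * e2).

Definition lam1 (R : realType) (A : Zt R -> Prop) (z : Zt R) : Prop :=
  A z \/
  exists (z1 z2 : Zt R) (t : R),
    A z1 /\ A z2 /\ 0 <= t <= 1 /\ wave_cone (Zsub z1 z2) /\ z = Zcomb t z1 z2.

Definition K_lam2 (R : realType) (p : R) : Zt R -> Prop := lam1 (lam1 (inK p)).

(* lambda_max(M) < e, expressed as: every (real) eigenvalue of M is < e.
   For a real symmetric matrix the eigenvalues are real and nonempty, so
   this is exactly "the largest eigenvalue is < e". *)
Definition lambda_max_lt (R : realType) (M : 'M[R]_2) (e : R) : Prop :=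
  forall a : R, eigenvalue M a -> a < e.

(* Main.v *)
Require Import Defs.
From HB Require Import structures.
From mathcomp Require Import all_boot all_order all_algebra.
From mathcomp Require Import reals ring lra.
Set Implicit Arguments. Unset Strict Implicit. Unset Printing Implicit Defensive.
Import Order.TTheory GRing.Theory Num.Theory.
Local Open Scope ring_scope.

Section S.
Variable R : realType.
Implicit Types x y a b c d : R.

Definition col2 x y : 'cV[R]_2 := \col_(i < 2) (if val i == 0%N then x else y).
Definition mat2 a b c d : 'M[R]_2 :=
  \matrix_(i < 2, j < 2) (if val i == 0%N then (if val j == 0%N then a else b)
                          else (if val j == 0%N then c else d)).

Lemma col2K (u : 'cV[R]_2) : u = col2 (u 0 0) (u 1 0).
Proof.
apply/matrixP => i j; rewrite !mxE (ord1 j).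
by case: i => [[|[|//]]] Hi /=; congr (u _ _); apply: val_inj.
Qed.

Lemma mat2K (u : 'M[R]_2) : u = mat2 (u 0 0) (u 0 1) (u 1 0) (u 1 1).
Proof.
apply/matrixP => i j; rewrite !mxE.
by case: i => [[|[|//]]] Hi; case: j => [[|[|//]]] Hj /=; congr (u _ _); apply: val_inj.
Qed.

Lemma col2_inj x y x' y' : col2 x y = col2 x' y' -> x = x' /\ y = y'.
Proof.
move=> /matrixP H; split; [move: (H 0 0) | move: (H 1 0)]; by rewrite !mxE.
Qed.

Definition Z4 vx vy mx my s11 s12 e : Zt R :=
  (col2 vx vy, col2 mx my, mat2 s11 s12 s12 (- s11), e).

Ltac ent := apply/matrixP => -[[|[|//]]] ? -[[|[|//]]] ?; rewrite !mxE /=.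

Lemma ZcombZ4 t vx vy mx my s11 s12 e vx' vy' mx' my' s11' s12' e' :
  Zcomb t (Z4 vx vy mx my s11 s12 e) (Z4 vx' vy' mx' my' s11' s12' e') =
  Z4 (t*vx + (1-t)*vx') (t*vy + (1-t)*vy') (t*mx + (1-t)*mx') (t*my + (1-t)*my')
     (t*s11 + (1-t)*s11') (t*s12 + (1-t)*s12') (t*e + (1-t)*e').
Proof.
rewrite /Zcomb /Z4; congr (_,_,_,_); ent; ring.
Qed.

Lemma ZsubZ4 vx vy mx my s11 s12 e vx' vy' mx' my' s11' s12' e' :
  Zsub (Z4 vx vy mx my s11 s12 e) (Z4 vx' vy' mx' my' s11' s12' e') =
  Z4 (vx - vx') (vy - vy') (mx - mx') (my - my') (s11 - s11') (s12 - s12') (e - e').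
Proof.
rewrite /Zsub /Z4; congr (_,_,_,_); ent; ring.
Qed.

Lemma inZ_Z4 vx vy mx my s11 s12 e : inZ (Z4 vx vy mx my s11 s12 e).
Proof.
rewrite /inZ /Z4; split; first by ent.
rewrite /mxtrace !big_ord_recl big_ord0 !mxE /=; ring.
Qed.

Lemma wc_Z4 vx vy mx my s11 s12 e x y c :
  ~ (vx = 0 /\ vy = 0 /\ e = 0) -> ~ (x = 0 /\ y = 0 /\ c = 0) ->
  (s11 + e) * x + s12 * y + c * vx = 0 ->
  s12 * x + (e - s11) * y + c * vy = 0 ->
  vx * x + vy * y = 0 ->
  mx * x + my * y + c * e = 0 ->
  wave_cone (Z4 vx vy mx my s11 s12 e).
Proof.
move=> Hv Hx E1 E2 E3 E4; split; first exact: inZ_Z4.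
split.
  move=> [H0 He]; apply: Hv; move/col2_inj: (etrans H0 (col2K 0)).
  by rewrite !mxE => -[-> ->].
exists (col2 x y), c; split.
  move=> [H0 Hc]; apply: Hx; move/col2_inj: (etrans H0 (col2K 0)).
  by rewrite !mxE => -[-> ->].
split.
  apply/matrixP => i j; rewrite (ord1 j) !mxE !big_ord_recl big_ord0 !mxE /=.
  case: i => [[|[|//]]] Hi /=; rewrite ?mulr1n ?mulr0n.
    lra.
  lra.
split.
  by rewrite /dot !big_ord_recl big_ord0 !mxE /=; lra.
by rewrite /dot !big_ord_recl big_ord0 !mxE /=; lra.
Qed.

Lemma inK_Z4 p vx vy mx my s11 s12 e :
  vx * vx - s11 = e -> vx * vy - s12 = 0 -> vy * vy + s11 = e ->
  mx = (e + p) * vx -> my = (e + p) * vy ->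
  inK p (Z4 vx vy mx my s11 s12 e).
Proof.
move=> E1 E2 E3 E4 E5; split; first exact: inZ_Z4.
split.
  apply/matrixP => i j; rewrite !mxE !big_ord_recl big_ord0 !mxE /=.
  case: i => [[|[|//]]] Hi; case: j => [[|[|//]]] Hj /=; rewrite ?mulr1n ?mulr0n.
  - lra.
  - lra.
  - lra.
  - lra.
apply/matrixP => i j; rewrite (ord1 j) !mxE.
by case: i => [[|[|//]]] Hi /=.
Qed.

Definition kp p ax ay : Zt R :=
  let n := (ax ^+ 2 + ay ^+ 2) / 2 in
  Z4 ax ay ((n + p) * ax) ((n + p) * ay) ((ax ^+ 2 - ay ^+ 2) / 2) (ax * ay) n.

Definition pt p cx cy P11 P12 P22 qx qy : Zt R :=
  let e := (cx ^+ 2 + cy ^+ 2 + P11 + P22) / 2 in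
  Z4 cx cy ((e + p) * cx + qx) ((e + p) * cy + qy) (cx ^+ 2 - e + P11) (cx * cy + P12) e.

Lemma inK_kp p ax ay : inK p (kp p ax ay).
Proof. by apply: inK_Z4; rewrite /=; field. Qed.

Lemma wc_kp p ax ay bx b_y : ~ (ax = bx /\ ay = b_y) -> wave_cone (Zsub (kp p ax ay) (kp p bx b_y)).
Proof.
move=> Hab; rewrite ZsubZ4.
apply: (@wc_Z4 _ _ _ _ _ _ _ (b_y - ay) (ax - bx) (- (ax * (b_y - ay) + ay * (ax - bx)))).
- move=> [H1 [H2 _]]; apply: Hab; split; lra.
- move=> [H1 [H2 _]]; apply: Hab; split; lra.
- by field.
- by field.
- ring.
- by field.
Qed.

Lemma lvl1 p s cx cy dx dy :
  Zcomb s (kp p (cx + (1 - s) * dx) (cy + (1 - s) * dy)) (kp p (cx - s * dx) (cy - s * dy))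
  = pt p cx cy (s * (1 - s) * dx ^+ 2) (s * (1 - s) * (dx * dy)) (s * (1 - s) * dy ^+ 2)
      (s * (1 - s) * (dx * cx + dy * cy + (2^-1 - s) * (dx ^+ 2 + dy ^+ 2)) * dx)
      (s * (1 - s) * (dx * cx + dy * cy + (2^-1 - s) * (dx ^+ 2 + dy ^+ 2)) * dy).
Proof. rewrite /kp /pt ZcombZ4; congr Z4; by field. Qed.

Lemma lvl2 p t c1x c1y c2x c2y P11 P12 P22 qx qy :
  Zcomb t (pt p c1x c1y P11 P12 P22 qx qy) (pt p c2x c2y P11 P12 P22 qx qy)
  = let Dx := c1x - c2x in let Dy := c1y - c2y in
    let De := (c1x ^+ 2 + c1y ^+ 2 - c2x ^+ 2 - c2y ^+ 2) / 2 in
    pt p (t * c1x + (1 - t) * c2x) (t * c1y + (1 - t) * c2y)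
      (P11 + t * (1 - t) * Dx ^+ 2) (P12 + t * (1 - t) * (Dx * Dy)) (P22 + t * (1 - t) * Dy ^+ 2)
      (qx + t * (1 - t) * De * Dx) (qy + t * (1 - t) * De * Dy).
Proof. rewrite /pt ZcombZ4 /=; congr Z4; by field. Qed.

Lemma wc_pt p c1x c2x cy P11 P12 P22 qx qy : c1x != c2x ->
  wave_cone (Zsub (pt p c1x cy P11 P12 P22 qx qy) (pt p c2x cy P11 P12 P22 qx qy)).
Proof.
move=> Hc; rewrite /pt ZsubZ4.
apply: (@wc_Z4 _ _ _ _ _ _ _ 0 1 (- cy)).
- move=> [H1 _]; move/eqP: Hc; apply; lra.
- move=> [_ [H _]]; move: H; apply/eqP; exact: oner_neq0.
- by field.
- by field.
- ring.
- by field.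
Qed.

Lemma eig2 u11 u12 u22 e :
  (forall a x y, ~ (x = 0 /\ y = 0) -> x * u11 + y * u12 = a * x ->
       x * u12 + y * u22 = a * y -> a < e) ->
  0 < e - u22 /\ 0 < (e - u11) * (e - u22) - u12 ^+ 2.
Proof.
move=> H.
have [Hu0|Hu] := eqVneq u12 0.
  rewrite Hu0 in H *.
  have h1 : u11 < e.
    apply: (H u11 1 0); [by case=> /eqP; rewrite oner_eq0 | ring | ring].
  have h2 : u22 < e.
    apply: (H u22 0 1); [by case=> _ /eqP; rewrite oner_eq0 | ring | ring].
  split; first lra.
  have : 0 < (e - u11) * (e - u22) by apply: mulr_gt0; lra.
  lra.
set K := ((u11 - u22) / 2) ^+ 2 + u12 ^+ 2.
have K0 : 0 <= K by rewrite /K; apply: addr_ge0; apply: sqr_ge0.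
set rho := Num.sqrt K.
have Hr : rho ^+ 2 = K by apply: sqr_sqrtr.
have r0 : 0 <= rho by apply: sqrtr_ge0.
set lam := (u11 + u22) / 2 + rho.
have hl : lam < e.
  apply: (H lam (lam - u22) u12).
  - by move=> [_ h]; move/eqP: Hu.
  - rewrite /lam; move: Hr; rewrite /K; lra.
  - rewrite /lam; ring.
have h1 : (u22 - u11) / 2 <= rho.
  rewrite /K in Hr; nra.
split; first by rewrite /lam in hl; lra.
have : 0 < (e - lam) * (e - lam + 2 * rho) by apply: mulr_gt0; lra.
rewrite /lam; move: Hr; rewrite /K; lra.
Qed.

Lemma param r h : 0 < r -> exists t d,
  [/\ 0 < d, 0 <= t <= 1, t * (1 - t) * d ^+ 2 = r & (2^-1 - t) * d = h].
Proof.
move=> r0.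
set d := 2 * Num.sqrt (r + h ^+ 2).
have d0 : 0 < d by rewrite /d mulr_gt0 // sqrtr_gt0; nra.
have Hd : d ^+ 2 = 4 * (r + h ^+ 2).
  rewrite /d exprMn sqr_sqrtr; [ring | nra].
have dn : d != 0 by rewrite gt_eqF.
have hd1 : h <= d / 2 by nra.
have hd2 : - (d / 2) <= h by nra.
exists (2^-1 - h / d), d; split => //.
- have e1 : h / d <= 2^-1 by rewrite ler_pdivrMr //; lra.
  have e2 : - 2^-1 <= h / d by rewrite ler_pdivlMr //; lra.
  apply/andP; split; lra.
- have -> : (2^-1 - h / d) * (1 - (2^-1 - h / d)) * d ^+ 2 = d ^+ 2 / 4 - h ^+ 2 by field.
  by rewrite Hd; field.
- by field.
Qed.

Lemma mainZ p vx vy mx my s11 s12 e :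
  0 < e - (vy * vy + s11) ->
  0 < (e - (vx * vx - s11)) * (e - (vy * vy + s11)) - (vx * vy - s12) ^+ 2 ->
  K_lam2 p (Z4 vx vy mx my s11 s12 e).
Proof.
set ga := e - (vy * vy + s11) => g0 D0.
set al := e - vx * vx + s11.
set be := s12 - vx * vy.
set qx := mx - (e + p) * vx.
set qy := my - (e + p) * vy.
have gn : ga != 0 by rewrite gt_eqF.
have Edata : Z4 vx vy mx my s11 s12 e = pt p vx vy al be ga qx qy.
  rewrite /pt /=; congr Z4; rewrite /al /be /ga /qx /qy; by field.
rewrite Edata.
set r := al - be ^+ 2 / ga.
have r0 : 0 < r.
  have -> : r = ((e - (vx * vx - s11)) * (e - (vy * vy + s11)) - (vx * vy - s12) ^+ 2) / ga.
    by rewrite /r /al /be /ga; field.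
  by apply: divr_gt0.
have rn : r != 0 by rewrite gt_eqF.
set g := qy / ga.
set h := (qx - g * be) / r - vx.
have [t [d [d0 t01 Ht Hh]]] := param h r0.
have w0 : 0 < be ^+ 2 + ga ^+ 2 by apply: ltr_wpDl; [exact: sqr_ge0 | exact: exprn_gt0].
have wn : be ^+ 2 + ga ^+ 2 != 0 by rewrite gt_eqF.
have ig0 : 0 < ga^-1 by rewrite invr_gt0.
pose lev (cx : R) := exists2 z, lam1 (inK p) z & z = pt p cx vy (be ^+ 2 / ga) be ga (g * be) (g * ga).
have Hlev : forall cx, lev cx.
  move=> cx.
  set hi := (g * ga - (be * cx + ga * vy)) / (be ^+ 2 + ga ^+ 2).
  have [s [k [k0 s01 Hs Hk]]] := param hi ig0.
  exists (Zcomb s (kp p (cx + (1 - s) * (k * be)) (vy + (1 - s) * (k * ga)))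
                  (kp p (cx - s * (k * be)) (vy - s * (k * ga)))).
    right; exists (kp p (cx + (1 - s) * (k * be)) (vy + (1 - s) * (k * ga))),
      (kp p (cx - s * (k * be)) (vy - s * (k * ga))), s.
    split; first exact: inK_kp.
    split; first exact: inK_kp.
    split; first exact: s01.
    split; last by [].
    apply: wc_kp => -[_ H].
    have : 0 < k * ga by apply: mulr_gt0.
    lra.
  rewrite lvl1; congr pt.
  - transitivity (s * (1 - s) * k ^+ 2 * be ^+ 2); first by ring.
    by rewrite Hs; field.
  - transitivity (s * (1 - s) * k ^+ 2 * be * ga); first by ring.
    by rewrite Hs; field.
  - transitivity (s * (1 - s) * k ^+ 2 * ga ^+ 2); first by ring.
    by rewrite Hs; field.
  - transitivity (s * (1 - s) * k ^+ 2 * ((be * cx + ga * vy) + (2^-1 - s) * k * (be ^+ 2 + ga ^+ 2)) * be); first by ring.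
    by rewrite Hs Hk /hi; field; rewrite wn gn.
  - transitivity (s * (1 - s) * k ^+ 2 * ((be * cx + ga * vy) + (2^-1 - s) * k * (be ^+ 2 + ga ^+ 2)) * ga); first by ring.
    by rewrite Hs Hk /hi; field; rewrite wn gn.
have [z1 Hz1 Ez1] := Hlev (vx + (1 - t) * d).
have [z2 Hz2 Ez2] := Hlev (vx - t * d).
right; exists z1, z2, t.
split; first exact: Hz1.
split; first exact: Hz2.
split; first exact: t01.
split.
  rewrite Ez1 Ez2; apply: wc_pt; apply/eqP => H.
  have : d = 0 by lra.
  by move/eqP; rewrite gt_eqF.
rewrite Ez1 Ez2 lvl2 /=; congr pt.
- by ring.
- by ring.
- transitivity (be ^+ 2 / ga + t * (1 - t) * d ^+ 2); last by ring.
  by rewrite Ht /r; field; rewrite gn.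
- by ring.
- by ring.
- transitivity (g * be + (t * (1 - t) * d ^+ 2) * (vx + (2^-1 - t) * d)); last by field.
  by rewrite Ht Hh /h; field; rewrite rn.
- by rewrite /g; field; rewrite gn.
Qed.

End S.

Theorem lemma2p7 (R : realType) (p : R) (v m : 'cV[R]_2) (s : 'M[R]_2) (e : R) :
  inZ (v, m, s, e) ->
  m <> (e + p) *: v ->
  lambda_max_lt (tens v - s) e ->
  K_lam2 p (v, m, s, e).
Proof.
move=> [Hsym Htr] _ Hl.
rewrite (col2K v) (col2K m) (mat2K s) in Hsym Htr Hl *.
set vx := v 0 0 in Hl *; set vy := v 1 0 in Hl *.
set mx := m 0 0; set my := m 1 0.
set s00 := s 0 0 in Hsym Htr Hl *; set s01 := s 0 1 in Hsym Htr Hl *.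
set s10 := s 1 0 in Hsym Htr Hl *; set s11 := s 1 1 in Hsym Htr Hl *.
have E10 : s10 = s01.
  by move/matrixP: Hsym => /(_ 1 0); rewrite !mxE.
have E11 : s11 = - s00.
  move: Htr; rewrite /mxtrace !big_ord_recl big_ord0 !mxE /= => H; lra.
rewrite E10 E11 in Hl *.
have -> : (col2 vx vy, col2 mx my, mat2 s00 s01 s01 (- s00), e) = Z4 vx vy mx my s00 s01 e by [].
have HE : forall a x y, ~ (x = 0 /\ y = 0) -> x * (vx * vx - s00) + y * (vx * vy - s01) = a * x ->
       x * (vx * vy - s01) + y * (vy * vy + s00) = a * y -> a < e.
  move=> a x y Hxy E1 E2; apply: Hl; apply/eigenvalueP.
  exists (\row_(j < 2) if val j == 0%N then x else y).
    apply/matrixP => i j; rewrite (ord1 i).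
    rewrite !(mxE, big_ord_recl, big_ord0) /=.
    case: j => [[|[|//]]] Hj => /=; lra.
  apply/eqP => /matrixP H0; apply: Hxy.
  by move: (H0 0 0) (H0 0 1); rewrite !mxE /= => -> ->.
have [H1 H2] := eig2 HE.
exact: mainZ.
Qed.
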